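(* Let $G$ be a finite, simple, connected graph with $\dim_{wt}(G)=2$ and let $\{u,v\}$ be a weak total metric basis of $G$. Then $u$ and $v$ each have degree at most two.
   Context: $d(x,y)$ is the shortest-path distance. A set $W\subseteq V(G)$ is a resolving set if for every two distinct vertices $y,z$ there is $x\in W$ with $d(y,x)\ne d(z,x)$. A set $W$ is a weak total resolving set (WTR-set) if $W$ is resolving and, for every $w\in W$ and every $x\in V(G)\setminus W$, there is $w'\in W\setminus\{w\}$ with $d(x,w')\ne d(w,w')$. $\dim_{wt}(G)$ is the minimum cardinality of a WTR-set, and a weak total metric basis is a WTR-set of that cardinality. *)

(* Defs.v *)
From mathcomp Require Import all_boot.
Set Implicit Arguments. Unset Strict Implicit. Unset Printing Implicit Defensive.

Section Graph.
Variables (T : finType) (e : rel T).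

Definition simple_graph := symmetric e /\ irreflexive e.
Definition connected_graph := forall x y : T, connect e x y.

Definition walk_n (n : nat) (x y : T) : bool :=
  [exists p : n.-tuple T, path e x p && (last x p == y)].

(* shortest-path distance: least n with an n-edge walk from x to y.
   In a connected graph this n is < #|T|, so searching 0..#|T|-1 suffices. *)
Definition dist (x y : T) : nat := find (fun n => walk_n n x y) (iota 0 #|T|).

Definition deg (x : T) : nat := #|[set y | e x y]|.

Definition resolving (W : {set T}) : bool :=
  [forall y, forall z, (y != z) ==> [exists x in W, dist y x != dist z x]].

Definition wtr_set (W : {set T}) : bool :=
  resolving W &&
  [forall w in W, forall x in ~: W,
     [exists w' in W :\ w, dist x w' != dist w w']].

(* minimum cardinality of a WTR-set (V(G) itself is always one) *)
Definition dim_wt : nat := \big[minn/#|T|]_(W : {set T} | wtr_set W) #|W|.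

Definition wt_basis (W : {set T}) : bool := wtr_set W && (#|W| == dim_wt).
End Graph.

(* Main.v *)
Require Import Defs.
From mathcomp Require Import all_boot.
From mathcomp Require Import zify.

Section Aux.
Variables (T : finType) (e : rel T).
Hypothesis conn : connected_graph e.

Lemma walk_ex x y : exists2 k, k < #|T| & walk_n e k x y.
Proof.
have := conn x y; case/connectP => p pth ->.
case: (shortenP pth) => p' pth' uq _.
exists (size p').
  have := max_card (mem (x :: p')).
  by rewrite (card_uniqP uq) /=.
apply/existsP; exists (in_tuple p'); by rewrite /= pth' eqxx.
Qed.

Lemma dist_lt x y : dist e x y < #|T|.
Proof.
have [k lk wk] := walk_ex x y.
rewrite /dist -[X in _ < X](size_iota 0 #|T|) -has_find.
apply/hasP; exists k; first by rewrite mem_iota.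
done.
Qed.

Lemma dist_walk x y : walk_n e (dist e x y) x y.
Proof.
have := dist_lt x y; rewrite /dist => H.
have Hh : has (fun n => walk_n e n x y) (iota 0 #|T|).
  by rewrite has_find size_iota.
have := nth_find 0 Hh.
by rewrite nth_iota // add0n.
Qed.

Lemma dist_min k x y : walk_n e k x y -> dist e x y <= k.
Proof.
move=> wk.
case: (ltnP k #|T|) => lk; last by apply: ltnW; apply: leq_trans (dist_lt x y) lk.
rewrite leqNgt; apply/negP => H.
have := before_find 0 H.
by rewrite nth_iota // add0n wk.
Qed.

Lemma walk0 x y : walk_n e 0 x y -> x = y.
Proof. by case/existsP => t; rewrite (tuple0 t) /= => /eqP. Qed.

Lemma walk_cons k x u v : e x u -> walk_n e k u v -> walk_n e k.+1 x v.
Proof.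
move=> exu /existsP [t /andP [pt lt]].
apply/existsP; exists [tuple of u :: t]; by rewrite /= exu pt.
Qed.

Lemma dist_refl x : dist e x x = 0.
Proof.
apply/eqP; rewrite -leqn0; apply: dist_min.
by apply/existsP; exists (in_tuple (@nil T)); rewrite /=.
Qed.

Lemma dist_adj x y : e x y -> x != y -> dist e x y = 1.
Proof.
move=> exy nxy.
have H1 : dist e x y <= 1.
  apply: dist_min; apply/existsP; exists (in_tuple [:: y]); by rewrite /= exy eqxx.
have H0 : dist e x y != 0.
  apply/eqP => H; have := dist_walk x y; rewrite H => /walk0 E.
  by rewrite E eqxx in nxy.
by move: H1 H0; case: (dist e x y) => [|[|]].
Qed.

Lemma dist_tri x u v : e x u -> dist e x v <= (dist e u v).+1.
Proof. move=> exu; apply: dist_min; apply: walk_cons exu (dist_walk u v). Qed.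

Lemma deg_le2 (u v : T) : simple_graph e -> u != v -> wtr_set e [set u; v] ->
  deg e u <= 2.
Proof.
move=> [sym irr] nuv /andP [res wtr].
set d := dist e u v.
have d1 : 1 <= d.
  rewrite lt0n; apply/eqP => H; have := dist_walk u v; rewrite -/d H => /walk0 E.
  by rewrite E eqxx in nuv.
have key : forall y, e u y -> (dist e y v == d - 1) || (dist e y v == d + 1).
  move=> y euy.
  have t1 : dist e y v <= d.+1 by apply: dist_tri; rewrite sym.
  have t2 : d <= (dist e y v).+1 by apply: dist_tri.
  case: (eqVneq y v) => [Eyv|nyv].
    subst y; rewrite dist_refl.
    have : d = 1 by rewrite /d; apply: dist_adj.
    by move=> ->.
  have nyu : y != u by apply/eqP => E; subst y; rewrite irr in euy.
  have yW : y \in ~: [set u; v] by rewrite in_setC !inE negb_or nyu nyv.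
  have := forall_inP wtr u; rewrite !inE eqxx => /(_ isT) /forall_inP /(_ y yW).
  case/exists_inP => w'; rewrite !inE => /andP [nw' /orP [/eqP E|/eqP E]].
    by rewrite E eqxx in nw'.
  subst w' => H; rewrite -/d in H.
  move: H t1 t2; lia.
rewrite /deg.
have inj : {in [set y | e u y] &, injective (fun y => dist e y v < d)}.
  move=> y z; rewrite !inE => uy uz /= E.
  apply/eqP; apply/negP => /negP nyz.
  have := forallP res y => /forallP /(_ z); rewrite nyz /= => /exists_inP [w].
  rewrite !inE => /orP [/eqP ->|/eqP ->].
    have Hy : dist e y u = 1.
      apply: dist_adj; first by rewrite sym.
      by apply/eqP => E'; subst y; rewrite irr in uy.
    have Hz : dist e z u = 1.
      apply: dist_adj; first by rewrite sym.
      by apply/eqP => E'; subst z; rewrite irr in uz.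
    by rewrite Hy Hz eqxx.
  move: (key y uy) (key z uz) E => /orP [/eqP H1|/eqP H1] /orP [/eqP H2|/eqP H2];
    rewrite H1 H2; lia.
rewrite -(card_in_imset inj).
apply: leq_trans (max_card _) _.
by rewrite card_bool.
Qed.
End Aux.

Theorem theorem1 (T : finType) (e : rel T) (u v : T) :
  simple_graph e -> connected_graph e ->
  dim_wt e = 2 -> u != v -> wt_basis e [set u; v] ->
  deg e u <= 2 /\ deg e v <= 2.
Proof.
move=> sg conn _ nuv /andP [w _]; split.
  exact: (@deg_le2 T e conn u v sg nuv w).
apply: (@deg_le2 T e conn v u sg); first by rewrite eq_sym.
by rewrite setUC.
Qed.
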